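(* Let $A \in \mathbb{R}^{m \times n}$ and $b \in \mathbb{R}^m$ be such that $\mathcal{P} = \{x \in \mathbb{R}^n : Ax \geq b\}$ is a polytope. Let $G$ be a finite undirected graph whose vertices are pairs $u = (I, X)$ with $I \subset [m]$ and $X \in \mathbb{R}^{n \times (1+m)}$. Suppose that $G$ is nonempty and that for every vertex $u = (I,X)$ of $G$: (i) $\#I = n$; (ii) $A_I X = \tilde b_I$; (iii) $A X \geq_{\mathrm{lex}} \tilde b$; (iv) $u$ has exactly $n$ neighbors in $G$; (v) for every neighbor $u' = (I', X')$ of $u$ in $G$, $\#(I \cap I') = n-1$. Then the vertex-edge graph $G_\mathrm{vert}$ of $\mathcal{P}$ equals the image of $G$ by the map $\varphi : (I,X) \mapsto$ (first column of $X$).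
   Context: Let $\tilde b := [\,b \;\; -\mathrm{Id}_m\,] \in \mathbb{R}^{m \times (1+m)}$. For row vectors $\alpha,\beta \in \mathbb{R}^{1+m}$, $\alpha \leq_{\mathrm{lex}} \beta$ means $\alpha = \beta$ or $\alpha_k < \beta_k$ at the first index $k$ where they differ; for matrices with $1+m$ columns, $X \geq_{\mathrm{lex}} Y$ means $X_i \geq_{\mathrm{lex}} Y_i$ for every row $i$. For $I \subset [m]$, $A_I$, $\tilde b_I$ are the submatrices of rows indexed by $I$. A face of $\mathcal{P}$ is a nonempty set of minimizers over $\mathcal{P}$ of some linear function $x \mapsto \langle c, x\rangle$; vertices and edges are faces of dimension 0 and 1; two vertices $v,w$ are adjacent if the segment $[v,w]$ is an edge. $G_\mathrm{vert}$ is the graph on the vertices of $\mathcal{P}$ with this adjacency. The image of a graph $(V,E)$ by $f$ is the graph with vertex set $f(V)$ and edges $\{(f(v),f(w)) : (v,w) \in E,\ f(v) \neq f(w)\}$. *)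

(* Defs.v *)
From HB Require Import structures.
From mathcomp Require Import all_boot all_order all_algebra.
From mathcomp Require Import reals.
Set Implicit Arguments. Unset Strict Implicit. Unset Printing Implicit Defensive.
Import Order.TTheory GRing.Theory Num.Theory.
Local Open Scope ring_scope.

Section PolytopeDefs.
Variables (R : realType) (m n : nat).
Variables (A : 'M[R]_(m, n)) (b : 'cV[R]_m).

Definition inP (x : 'cV[R]_n) : Prop := forall i : 'I_m, b i 0 <= (A *m x) i 0.

Definition bounded_P : Prop :=
  exists M : R, forall x, inP x -> forall j : 'I_n, `|x j 0| <= M.

Definition dotc (c x : 'cV[R]_n) : R := \sum_(j < n) c j 0 * x j 0.

Definition minimizers (c : 'cV[R]_n) (x : 'cV[R]_n) : Prop :=
  inP x /\ forall y, inP y -> dotc c x <= dotc c y.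

Definition is_face (S : 'cV[R]_n -> Prop) : Prop :=
  (exists x, S x) /\ exists c, forall x, S x <-> minimizers c x.

Definition is_vertex (v : 'cV[R]_n) : Prop := is_face (fun x => x = v).

Definition segment (v w : 'cV[R]_n) (x : 'cV[R]_n) : Prop :=
  exists t : R, 0 <= t <= 1 /\ x = (1 - t) *: v + t *: w.

Definition adjacent (v w : 'cV[R]_n) : Prop :=
  is_vertex v /\ is_vertex w /\ v <> w /\ is_face (segment v w).

Definition btilde : 'M[R]_(m, m.+1) := row_mx b (- 1%:M).

End PolytopeDefs.

Definition lex_le (R : realType) (k : nat) (a c : 'rV[R]_k) : Prop :=
  a = c \/ exists j : 'I_k,
    (forall j' : 'I_k, (j' < j)%N -> a 0 j' = c 0 j') /\ a 0 j < c 0 j.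

Definition good_label (R : realType) (m n : nat) (A : 'M[R]_(m, n)) (b : 'cV[R]_m)
  (I : {set 'I_m}) (X : 'M[R]_(n, m.+1)) : Prop :=
  #|I| = n /\
  (forall i : 'I_m, i \in I -> row i (A *m X) = row i (btilde b)) /\
  (forall i : 'I_m, lex_le (row i (btilde b)) (row i (A *m X))).

(* Main.v *)
Require Import Defs.
From HB Require Import structures.
From mathcomp Require Import all_boot all_order all_algebra.
From mathcomp Require Import reals.
From Stdlib Require Import Classical.
From mathcomp Require Import lra.
Import Order.TTheory GRing.Theory Num.Theory.
Local Open Scope ring_scope.
Set Implicit Arguments. Unset Strict Implicit. Unset Printing Implicit Defensive.

Section Lex.
Variables (R : realType) (k : nat).
Implicit Types a c : 'rV[R]_k.

Definition lexpos a : Prop :=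
  exists j : 'I_k, (forall j' : 'I_k, (j' < j)%N -> a 0 j' = 0) /\ 0 < a 0 j.
Definition lexnn a : Prop := a = 0 \/ lexpos a.

Lemma lexpos0 : ~ lexpos 0.
Proof. by case=> j [_]; rewrite mxE ltxx. Qed.

Lemma lexposD a c : lexpos a -> lexpos c -> lexpos (a + c).
Proof.
case=> ja [ha pa] [jc [hc pc]].
case: (ltngtP ja jc) => h.
- exists ja; split=> [j' lt|]; rewrite !mxE.
    by rewrite ha // hc ?addr0 // (ltn_trans lt h).
  by rewrite (hc _ h) addr0.
- exists jc; split=> [j' lt|]; rewrite !mxE.
    by rewrite hc // ha ?addr0 // (ltn_trans lt h).
  by rewrite (ha _ h) add0r.
- have e : ja = jc by apply: val_inj.
  subst jc; exists ja; split=> [j' lt|]; rewrite !mxE.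
    by rewrite ha // hc // addr0.
  exact: addr_gt0.
Qed.

Lemma lexposZ r a : 0 < r -> lexpos a -> lexpos (r *: a).
Proof.
move=> r0 [j [h p]]; exists j; split=> [j' lt|]; rewrite !mxE.
  by rewrite h // mulr0.
exact: mulr_gt0.
Qed.

Lemma lexpos_asym a : lexpos a -> lexpos (- a) -> False.
Proof.
case=> ja [ha pa] [jc [hc pc]].
case: (ltngtP ja jc) => h.
- by move: (hc _ h); rewrite mxE => /eqP; rewrite oppr_eq0 => /eqP e; rewrite e ltxx in pa.
- by move: (ha _ h) pc => e; rewrite mxE e oppr0 ltxx.
- have e : ja = jc by apply: val_inj.
  by subst jc; move: pc; rewrite mxE oppr_gt0 => /(lt_trans pa); rewrite ltxx.
Qed.

Lemma lexpos_total a : [\/ a = 0, lexpos a | lexpos (- a)].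
Proof.
case: (boolP [exists j, a 0 j != 0]) => [/existsP [j0 hj0]|].
  case: (@arg_minnP _ j0 (fun j : 'I_k => a 0 j != 0) (fun j : 'I_k => nat_of_ord j) hj0) => j hj hmin.
  have hb : forall j' : 'I_k, (j' < j)%N -> a 0 j' = 0.
    move=> j' lt; apply/eqP; apply: contraTT lt => nz.
    by rewrite -leqNgt; apply: hmin.
  case: (ltgtP (a 0 j) 0) => s.
  - apply: Or33; exists j; split=> [j' lt|]; rewrite mxE ?oppr_gt0 //.
    by rewrite hb // oppr0.
  - by apply: Or32; exists j.
  - by rewrite s eqxx in hj.
rewrite negb_exists => /forallP h; apply: Or31.
apply/rowP => j; rewrite mxE; exact/eqP/negPn/h.
Qed.

Lemma lexnnD a c : lexnn a -> lexnn c -> lexnn (a + c).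
Proof.
case=> [->|pa]; first by rewrite add0r.
case=> [->|pc]; first by rewrite addr0; right.
right; exact: lexposD.
Qed.

Lemma lexposDnn a c : lexpos a -> lexnn c -> lexpos (a + c).
Proof. by move=> pa [->|pc]; [rewrite addr0|exact: lexposD]. Qed.

Lemma lexnnZ r a : 0 <= r -> lexnn a -> lexnn (r *: a).
Proof.
rewrite le_eqVlt => /orP [/eqP <-|r0]; first by rewrite scale0r; left.
case=> [->|pa]; first by rewrite scaler0; left.
right; exact: lexposZ.
Qed.

Lemma lexnn_pos a : lexnn a -> a != 0 -> lexpos a.
Proof. by case=> [->|//]; rewrite eqxx. Qed.

Lemma lexnn_antisym a : lexnn a -> lexnn (- a) -> a = 0.
Proof.
case=> // pa [/eqP|pn]; first by rewrite oppr_eq0 => /eqP.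
by case: (lexpos_asym pa pn).
Qed.

Lemma lexnn_total a : lexnn a \/ lexnn (- a).
Proof. by case: (lexpos_total a) => [->|p|p]; [left; left|left; right|right; right]. Qed.

Lemma lexnn_tr a c d : lexnn (c - a) -> lexnn (d - c) -> lexnn (d - a).
Proof.
move=> h1 h2; have := lexnnD h2 h1.
by rewrite addrA subrK.
Qed.

Lemma lexnn_sum (I : finType) (P : pred I) (F : I -> 'rV[R]_k) :
  (forall i, P i -> lexnn (F i)) -> lexnn (\sum_(i | P i) F i).
Proof.
move=> h; apply: (big_ind lexnn) => //; first by left.
exact: lexnnD.
Qed.

Lemma lexnn_sum0 (I : finType) (P : pred I) (F : I -> 'rV[R]_k) :
  (forall i, P i -> lexnn (F i)) -> \sum_(i | P i) F i = 0 ->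
  forall i, P i -> F i = 0.
Proof.
move=> h s0 i Pi; apply/eqP; apply: contraT => nz.
have pi : lexpos (F i) by apply: lexnn_pos nz; apply: h.
move: s0; rewrite (bigD1 i) //= => s0.
have hr : lexnn (\sum_(j | P j && (j != i)) F j).
  by apply: lexnn_sum => j /andP [Pj _]; apply: h.
have := lexposDnn pi hr.
by rewrite s0 => /lexpos0.
Qed.

Lemma lex_leE a c : lex_le a c <-> lexnn (c - a).
Proof.
split.
  case=> [->|[j [h lt]]]; first by rewrite subrr; left.
  right; exists j; split=> [j' l|]; rewrite !mxE ?subr_gt0 //.
  by rewrite h // subrr.
case=> [/eqP|[j [h lt]]]; first by rewrite subr_eq0 => /eqP ->; left.
right; exists j; split=> [j' l|].
  by apply/eqP; rewrite eq_sym -subr_eq0; move: (h _ l); rewrite !mxE => ->.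
by move: lt; rewrite !mxE subr_gt0.
Qed.

Lemma lexmin (T : finType) (P : pred T) (f : T -> 'rV[R]_k) :
  (exists t, P t) -> exists t, P t /\ forall t', P t' -> lexnn (f t' - f t).
Proof.
case=> t0 Pt0.
suff: forall s : seq T, (exists2 t, t \in s & P t) ->
  exists t, P t /\ forall t', t' \in s -> P t' -> lexnn (f t' - f t).
  move=> /(_ (enum T)) []; first by exists t0; rewrite ?mem_enum.
  by move=> t [Pt h]; exists t; split=> // t' Pt'; apply: h; rewrite ?mem_enum.
elim=> [[]//|x s IH] hx.
case Px: (P x); last first.
  have [t ts Pt] : exists2 t, t \in s & P t.
    by case: hx => t; rewrite inE => /orP [/eqP ->|]; [rewrite Px|exists t].
  have [t' [Pt' h]] := IH (ex_intro2 _ _ t ts Pt).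
  exists t'; split=> // u; rewrite inE => /orP [/eqP ->|us]; first by rewrite Px.
  exact: h.
case: (boolP (has P s)) => [/hasP [t ts Pt]|hs].
  have [t' [Pt' h]] := IH (ex_intro2 _ _ t ts Pt).
  case: (lexnn_total (f x - f t')) => c.
    exists t'; split=> // u; rewrite inE => /orP [/eqP ->|us] //; exact: h.
  exists x; split=> // u; rewrite inE => /orP [/eqP ->|us Pu]; first by rewrite subrr; left.
  apply: (lexnn_tr (c := f t')); last exact: h.
  by rewrite opprB in c.
exists x; split=> // u; rewrite inE => /orP [/eqP ->|us Pu]; first by rewrite subrr; left.
by move/hasPn: hs => /(_ u us); rewrite Pu.
Qed.

End Lex.

Lemma lexnn_first (R : realType) (k : nat) (a : 'rV[R]_k.+1) : lexnn a -> 0 <= a 0 0.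
Proof.
case=> [->|[j [h p]]]; first by rewrite mxE.
case: (posnP j) => [j0|jp].
  have -> : (0 : 'I_k.+1) = j by apply: val_inj => /=; rewrite j0.
  exact: ltW.
by rewrite h.
Qed.



Section Lin.
Variables (R : realType) (m n : nat) (A : 'M[R]_(m, n)) (b : 'cV[R]_m).
Local Notation bt := (btilde b).

Definition Esub (S : {set 'I_m}) : 'M[R]_(#|S|, n) := \matrix_(r < #|S|) row (enum_val (A := S) r) A.

Lemma Esub_mul (S : {set 'I_m}) p (Z : 'M[R]_(n, p)) r :
  row r (Esub S *m Z) = row (enum_val (A := S) r) (A *m Z).
Proof. by rewrite row_mul rowK -row_mul. Qed.

Lemma Esub_inj (S : {set 'I_m}) p (Z : 'M[R]_(n, p)) : row_full (Esub S) ->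
  (forall i, i \in S -> row i (A *m Z) = 0) -> Z = 0.
Proof.
move=> rf h; apply: (row_full_inj rf); rewrite mulmx0.
apply/row_matrixP => r; rewrite Esub_mul row0; apply: h; exact: enum_valP.
Qed.

Lemma Esub_ker (S : {set 'I_m}) : (#|S| < n)%N ->
  exists d : 'cV[R]_n, d != 0 /\ forall i, i \in S -> (A *m d) i 0 = 0.
Proof.
move=> lt.
set K := kermx (Esub S)^T.
have rK : \rank K = (n - \rank (Esub S))%N by rewrite mxrank_ker mxrank_tr.
have K0 : K != 0.
  rewrite -mxrank_eq0 rK subn_eq0 -ltnNge.
  exact: leq_ltn_trans (rank_leq_row _) lt.
have [r hr] : exists r, row r K != 0.
  apply/existsP; move: K0; apply: contraR; rewrite negb_exists => /forallP h.
  apply/eqP/row_matrixP => r; rewrite row0; exact/eqP/negPn/h.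
exists (row r K)^T; split; first by rewrite trmx_eq0.
have hE : Esub S *m (row r K)^T = 0.
  apply: trmx_inj; rewrite trmx_mul trmxK trmx0 -row_mul mulmx_ker row0 //.
move=> i Si.
have := congr1 (fun M => row (enum_rank_in Si i) M) hE.
rewrite Esub_mul enum_rankK_in // row0 => /(congr1 (fun M : 'rV[R]_1 => M 0 0)).
by rewrite !mxE.
Qed.

Definition slk (X : 'M[R]_(n, m.+1)) (i : 'I_m) : 'rV[R]_m.+1 :=
  row i (A *m X) - row i bt.
Definition feas X : Prop := forall i, lexnn (slk X i).
Definition tightS X : {set 'I_m} := [set i | slk X i == 0].

Lemma bt_tail i j : bt i (rshift 1 j) = - (i == j)%:R.
Proof.
have := row_mxEr b (- 1%:M) i j; rewrite /btilde => ->.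
by rewrite !mxE.
Qed.

Lemma bt_head i : bt i (lshift m (0 : 'I_1)) = b i 0.
Proof. exact: (row_mxEl b (- 1%:M) i (0 : 'I_1)). Qed.

Lemma tight_rank (S : {set 'I_m}) (X : 'M[R]_(n, m.+1)) : (forall i, i \in S -> row i (A *m X) = row i bt) ->
  (#|S| <= \rank (Esub S))%N.
Proof.
move=> h.
set Y : 'M[R]_(n, m) := \matrix_(l, j) X l (rshift 1 j).
set P := Esub S *m Y.
have PE : forall r j, P r j = - (enum_val r == j)%:R.
  move=> r j.
  have e1 : (A *m X) (enum_val r) (rshift 1 j) = - (enum_val r == j)%:R.
    rewrite -bt_tail.
    have := congr1 (fun M : 'rV[R]_m.+1 => M 0 (rshift 1 j)) (h _ (enum_valP r)).
    by rewrite !mxE => ->.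
  have : row r P = row (enum_val r) (A *m Y) by rewrite Esub_mul.
  move/(congr1 (fun M : 'rV[R]_m => M 0 j)); rewrite !mxE => ->.
  rewrite -e1 mxE; apply: eq_bigr => l _; by rewrite mxE.
have PP : P *m P^T = 1%:M.
  apply/matrixP => r r'; rewrite [LHS]mxE [RHS]mxE.
  rewrite (bigD1 (enum_val r)) //= big1 ?addr0.
    rewrite [P^T _ _]mxE !PE eqxx mulNr mul1r opprK (inj_eq enum_val_inj) eq_sym.
    by case: (r' == r).
  move=> j nj; rewrite [P^T _ _]mxE !PE.
  by rewrite eq_sym (negbTE nj) oppr0 mul0r.
have := mxrankM_maxl P P^T; rewrite PP mxrank1 => h1.
exact: leq_trans h1 (mxrankM_maxl _ _).
Qed.

End Lin.

Section Lin2.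
Variables (R : realType) (m n : nat) (A : 'M[R]_(m, n)) (b : 'cV[R]_m).
Local Notation bt := (btilde b).
Local Notation slk := (slk A b).
Local Notation feas := (feas A b).
Local Notation tightS := (tightS A b).
Local Notation Esub := (Esub A).

Lemma rowE0 p q (M : 'M[R]_(p, q)) i j : row i M 0 j = M i j.
Proof. by rewrite mxE. Qed.

Lemma msubE p q (M N : 'M[R]_(p, q)) i j : (M - N) i j = M i j - N i j.
Proof. by rewrite !mxE. Qed.

Lemma row1_0 p (M : 'M[R]_(p, 1)) l : M l 0 = 0 -> row l M = 0.
Proof. by move=> h; apply/rowP => z; rewrite !mxE ord1. Qed.

Lemma rowAdt (d : 'cV[R]_n) (t : 'rV[R]_m.+1) i :
  row i (A *m (d *m t)) = (A *m d) i 0 *: t.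
Proof. by rewrite mulmxA row_mul [row i _]mx11_scalar mul_scalar_mx mxE. Qed.

Lemma sig_move X (d : 'cV[R]_n) (t : 'rV[R]_m.+1) i :
  slk (X + d *m t) i = slk X i + (A *m d) i 0 *: t.
Proof. by rewrite /slk mulmxDr linearD /= rowAdt addrAC. Qed.

Lemma good_row_full I X : good_label A b I X -> row_full (Esub I).
Proof.
case=> cI [ht _]; rewrite /row_full eqn_leq rank_leq_col /=.
exact: leq_trans (eq_leq (esym cI)) (tight_rank ht).
Qed.

Lemma good_feas I X : good_label A b I X -> feas X.
Proof. by case=> _ [_ hl] i; apply/lex_leE. Qed.

Lemma good_tight I X i : good_label A b I X -> i \in I -> slk X i = 0.
Proof. by case=> _ [ht _] iI; rewrite /slk ht // subrr. Qed.

Lemma rowfull_ker (S : {set 'I_m}) (d : 'cV[R]_n) : row_full (Esub S) ->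
  (forall i, i \in S -> (A *m d) i 0 = 0) -> d = 0.
Proof. by move=> rf h; apply: (Esub_inj rf) => i iS; apply: row1_0; apply: h. Qed.

Lemma colA (X : 'M[R]_(n, m.+1)) j l : (A *m col j X) l 0 = (A *m X) l j.
Proof. by rewrite !mxE; apply: eq_bigr => k _; rewrite mxE. Qed.

Lemma nondeg I X i : good_label A b I X -> i \notin I -> lexpos (slk X i).
Proof.
move=> g iI.
have c0 : col (rshift 1 i) X = 0.
  apply: (Esub_inj (good_row_full g)) => l lI; apply: row1_0.
  case: g => _ [ht _].
  rewrite colA.
  have := congr1 (fun M : 'rV[R]_m.+1 => M 0 (rshift 1 i)) (ht _ lI).
  rewrite !rowE0 bt_tail => ->.
  have : l != i by apply: contraNneq iI => <-.
  by move/negbTE => ->; rewrite oppr0.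
apply: lexnn_pos; first exact: (good_feas g).
apply/eqP => /(congr1 (fun M : 'rV[R]_m.+1 => M 0 (rshift 1 i))).
rewrite msubE !rowE0 bt_tail eqxx -colA c0 mulmx0 !mxE.
by move/eqP; rewrite sub0r opprK oner_eq0.
Qed.

End Lin2.

Section Lin3.
Variables (R : realType) (m n : nat) (A : 'M[R]_(m, n)) (b : 'cV[R]_m).
Local Notation bt := (btilde b).
Local Notation slk := (slk A b).
Local Notation feas := (feas A b).
Local Notation tightS := (tightS A b).
Local Notation Esub := (Esub A).
Local Notation good := (good_label A b).

Lemma dir_exists I X k : good I X -> k \in I ->
  exists d : 'cV[R]_n, (forall i, i \in I -> i != k -> (A *m d) i 0 = 0) /\ (A *m d) k 0 = 1.
Proof.
move=> g kI.
have cI : #|I| = n by case: g.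
have lt : (#|I :\ k| < n)%N.
  by move: cI; rewrite (cardsD1 k I) kI add1n => <-.
have [d0 [nz h0]] := Esub_ker A lt.
set a := (A *m d0) k 0.
have a0 : a != 0.
  apply: contra nz => /eqP a0; apply/eqP.
  apply: (rowfull_ker (good_row_full g)) => i iI.
  case: (eqVneq i k) => [->//|ik]; apply: h0; by rewrite in_setD1 ik.
exists (a^-1 *: d0); split.
  move=> i iI ik; rewrite -scalemxAr mxE h0 ?mulr0 //; by rewrite in_setD1 ik.
by rewrite -scalemxAr mxE -/a mulVf.
Qed.

Lemma rowA_sub (X Y : 'M[R]_(n, m.+1)) i : row i (A *m (Y - X)) = slk Y i - slk X i.
Proof. by rewrite /slk mulmxBr linearB /= opprB addrA subrK. Qed.

Lemma rank1 I X k (d : 'cV[R]_n) (D : 'M[R]_(n, m.+1)) : good I X -> k \in I ->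
  (forall i, i \in I -> i != k -> (A *m d) i 0 = 0) -> (A *m d) k 0 = 1 ->
  (forall i, i \in I -> i != k -> row i (A *m D) = 0) ->
  D = d *m row k (A *m D).
Proof.
move=> g kI hd hk hD; apply/eqP; rewrite -subr_eq0; apply/eqP.
apply: (Esub_inj (good_row_full g)) => i iI.
rewrite mulmxBr linearB /= rowAdt.
case: (eqVneq i k) => [->|ik]; first by rewrite hk scale1r subrr.
by rewrite hD // hd // scale0r subrr.
Qed.

Lemma tight_good X : feas X ->
  (forall d : 'cV[R]_n, (forall i, i \in tightS X -> (A *m d) i 0 = 0) -> d = 0) ->
  good (tightS X) X.
Proof.
move=> f hk.
have ht : forall i, i \in tightS X -> row i (A *m X) = row i bt.
  by move=> i; rewrite inE subr_eq0 => /eqP.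
split; last split => //.
  apply/eqP; rewrite eqn_leq; apply/andP; split.
    exact: leq_trans (tight_rank ht) (rank_leq_col _).
  rewrite leqNgt; apply/negP => /(Esub_ker A) [d [nz hd]].
  by move/eqP: nz; apply; apply: hk.
by move=> i; apply/lex_leE; apply: f.
Qed.

Lemma good_X I X X' : good I X -> good I X' -> X = X'.
Proof.
move=> g g'; apply/eqP; rewrite -subr_eq0; apply/eqP.
apply: (Esub_inj (good_row_full g)) => i iI.
by rewrite rowA_sub (good_tight g iI) (good_tight g' iI) subrr.
Qed.

Lemma pivot_form I X I1 X1 k : good I X -> good I1 X1 -> k \in I ->
  (forall i, i \in I -> i != k -> i \in I1) ->
  exists d : 'cV[R]_n, X1 = X + d *m slk X1 k.
Proof.
move=> g g1 kI sub.
have [d [hd hk]] := dir_exists g kI.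
exists d.
have -> : slk X1 k = row k (A *m (X1 - X)) by rewrite rowA_sub (good_tight g kI) subr0.
rewrite -(rank1 g kI hd hk); first by rewrite addrC subrK.
  move=> i iI ik.
by rewrite rowA_sub (good_tight g iI) (good_tight g1 (sub _ iI ik)) subrr.
Qed.

Lemma uniq_half I X I1 X1 I2 X2 k l : good I X -> good I1 X1 -> good I2 X2 ->
  k \in I -> k \notin I1 -> k \notin I2 ->
  (forall i, i \in I -> i != k -> i \in I1) -> (forall i, i \in I -> i != k -> i \in I2) ->
  l \in I1 -> l \notin I2 -> l \notin I ->
  lexpos (slk X1 k - slk X2 k).
Proof.
move=> g g1 g2 kI kI1 kI2 s1 s2 lI1 lI2 lI.
have [d [hd hk]] := dir_exists g kI.
have e1 : X1 = X + d *m slk X1 k.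
  have -> : slk X1 k = row k (A *m (X1 - X)) by rewrite rowA_sub (good_tight g kI) subr0.
  rewrite -(rank1 g kI hd hk); first by rewrite addrC subrK.
  move=> i iI ik.
  by rewrite rowA_sub (good_tight g iI) (good_tight g1 (s1 _ iI ik)) subrr.
have e2 : X2 = X + d *m slk X2 k.
  have -> : slk X2 k = row k (A *m (X2 - X)) by rewrite rowA_sub (good_tight g kI) subr0.
  rewrite -(rank1 g kI hd hk); first by rewrite addrC subrK.
  move=> i iI ik.
  by rewrite rowA_sub (good_tight g iI) (good_tight g2 (s2 _ iI ik)) subrr.
set t1 := slk X1 k in e1 *; set t2 := slk X2 k in e2 *.
set a := (A *m d) l 0.
have pl := nondeg g lI.
have z1 : slk X l + a *: t1 = 0 by rewrite -sig_move -e1 (good_tight g1 lI1).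
have p2 : lexpos (slk X l + a *: t2) by rewrite -sig_move -e2; apply: nondeg g2 lI2.
have p1 : lexpos t1 by apply: nondeg g1 kI1.
have a0 : a < 0.
  rewrite ltNge; apply/negP => a0.
  have := lexposDnn pl (lexnnZ a0 (or_intror p1)).
  by rewrite z1 => /lexpos0.
have : lexpos (a *: (t2 - t1)).
  have -> : a *: (t2 - t1) = slk X l + a *: t2 - (slk X l + a *: t1).
    by rewrite scalerBr opprD addrACA subrr add0r.
  by rewrite z1 subr0.
move/(lexposZ (r := (- a)^-1)); rewrite ?invr_gt0 ?oppr_gt0 // => /(_ a0).
rewrite scalerA invrN mulNr mulVf ?lt_eqF // scaleN1r opprB.
by [].
Qed.

Lemma uniq_nb I X I1 X1 I2 X2 k : good I X -> good I1 X1 -> good I2 X2 ->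
  k \in I -> k \notin I1 -> k \notin I2 ->
  (forall i, i \in I -> i != k -> i \in I1) -> (forall i, i \in I -> i != k -> i \in I2) ->
  I1 = I2.
Proof.
move=> g g1 g2 kI kI1 kI2 s1 s2.
have c1 : #|I1| = n by case: g1.
have c2 : #|I2| = n by case: g2.
have notin : forall (J : {set 'I_m}) l, l \in J -> (forall i, i \in I -> i != k -> i \in J) -> k \notin J ->
    forall J' : {set 'I_m}, (forall i, i \in I -> i != k -> i \in J') -> l \notin J' -> l \notin I.
  move=> J l lJ sJ kJ J' sJ' lJ'; apply/negP => lI.
  have lk : l != k by apply: contraNneq kJ => <-.
  by move: lJ'; rewrite sJ'.
case: (boolP (I1 \subset I2)) => h12.
  by apply/eqP; rewrite eqEcard h12 c1 c2 leqnn.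
case: (boolP (I2 \subset I1)) => h21.
  by apply/eqP; rewrite eq_sym eqEcard h21 c1 c2 leqnn.
have [l1 l1I1 l1I2] := subsetPn h12.
have [l2 l2I2 l2I1] := subsetPn h21.
have q1 := uniq_half g g1 g2 kI kI1 kI2 s1 s2 l1I1 l1I2 (notin _ _ l1I1 s1 kI1 _ s2 l1I2).
have q2 := uniq_half g g2 g1 kI kI2 kI1 s2 s1 l2I2 l2I1 (notin _ _ l2I2 s2 kI2 _ s1 l2I1).
by case: (lexpos_asym q1); rewrite opprB.
Qed.

End Lin3.

Section Graph.
Variables (R : realType) (m n : nat) (A : 'M[R]_(m, n)) (b : 'cV[R]_m).
Variables (V : finType) (e : rel V) (lab : V -> {set 'I_m} * 'M[R]_(n, m.+1)).
Local Notation bt := (btilde b).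
Local Notation slk := (slk A b).
Local Notation good := (good_label A b).
Local Notation Esub := (Esub A).
Hypothesis hinj : injective lab.
Hypothesis hgood : forall u, good (lab u).1 (lab u).2.
Hypothesis hdeg : forall u, #|[set u' | e u u']| = n.
Hypothesis hint : forall u u', e u u' -> #|(lab u).1 :&: (lab u').1| = (n - 1)%N.

Lemma nb_diff u u' k : k \in (lab u).1 -> e u u' ->
  exists j, (lab u).1 :\: (lab u').1 = [set j].
Proof.
move=> kI euu; apply/cards1P.
have cI : #|(lab u).1| = n by case: (hgood u).
have n0 : (0 < n)%N by rewrite -cI; apply/card_gt0P; exists k.
by rewrite cardsD hint // cI; apply/eqP; case: n n0 {cI} => // n' _; rewrite subSS subn0 subSn // subnn.
Qed.

Lemma nb_exists u k : k \in (lab u).1 ->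
  exists u', [/\ e u u', k \notin (lab u').1 &
    forall i, i \in (lab u).1 -> i != k -> i \in (lab u').1].
Proof.
move=> kI.
set N := [set u' | e u u'].
set kf := fun u' => odflt k [pick j in (lab u).1 :\: (lab u').1].
have kfP : forall u', u' \in N -> [/\ kf u' \in (lab u).1, kf u' \notin (lab u').1 &
    forall i, i \in (lab u).1 -> i != kf u' -> i \in (lab u').1].
  move=> u'; rewrite inE => euu.
  have [j hj] := nb_diff kI euu.
  have -> : kf u' = j.
    rewrite /kf; case: pickP => [x|]; first by rewrite hj inE => /eqP.
    by move/(_ j); rewrite hj set11.
  have : j \in (lab u).1 :\: (lab u').1 by rewrite hj set11.
  rewrite inE => /andP [jn ju]; split => // i iI ij.
  apply: contraR ij => iu; apply/eqP/set1P; rewrite -hj inE iu iI.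
  by [].
have kinj : {in N &, injective kf}.
  move=> u1 u2 N1 N2 eq.
  have [a1 b1 c1] := kfP _ N1; have [a2 b2 c2] := kfP _ N2.
  rewrite eq in a1 b1 c1.
  have eI := uniq_nb (hgood u) (hgood u1) (hgood u2) a2 b1 b2 c1 c2.
  apply: hinj; rewrite [lab u1]surjective_pairing [lab u2]surjective_pairing eI.
  congr pair; apply: (good_X (hgood u1)); rewrite eI; exact: hgood.
have himg : kf @: N = (lab u).1.
  apply/eqP; rewrite eqEcard; apply/andP; split.
    by apply/subsetP => j /imsetP [u' Nu' ->]; case: (kfP _ Nu').
  by rewrite (card_in_imset kinj) hdeg; case: (hgood u) => ->.
move: kI; rewrite -himg => /imsetP [u' Nu' ->].
have [_ h1 h2] := kfP _ Nu'; exists u'; split => //.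
all: try by move: Nu'; rewrite inE.
by rewrite himg.
Qed.

Lemma complete (u0 : V) I0 X0 : good I0 X0 -> exists u, lab u = (I0, X0).
Proof.
move=> g0.
set F := fun Y => \sum_(i in I0) slk Y i.
have [us [_ hmin]] := lexmin (fun u => F (lab u).2) (ex_intro (fun u : V => predT u) u0 isT).
set I := (lab us).1; set X := (lab us).2.
have g : good I X by apply: hgood.
have [lam hlam] : exists lam : 'rV[R]_#|I|, \sum_(i in I0) row i A = lam *m Esub I.
  by apply/submxP; apply: submx_full; apply: good_row_full g.
have Fdiff : forall Y, F Y - F X = \sum_r lam 0 r *: (slk Y (enum_val r) - slk X (enum_val r)).
  move=> Y; rewrite /F -sumrB.
  under eq_bigr => i _ do rewrite -(rowA_sub A b) row_mul.
  rewrite -mulmx_suml hlam -mulmxA mulmx_sum_row.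
  by apply: eq_bigr => r _; rewrite Esub_mul (rowA_sub A b).
case: (boolP [forall r, 0 <= lam 0 r]) => [/forallP hpos|].
  have FX0 : F X0 = 0 by apply: big1 => i iI0; apply: good_tight g0 iI0.
  have nnF : lexnn (F X) by apply: lexnn_sum => i _; apply: (good_feas g).
  have : lexnn (F X0 - F X).
    rewrite Fdiff; apply: lexnn_sum => r _; apply: lexnnZ => //.
    by rewrite (good_tight g (enum_valP r)) subr0; apply: (good_feas g0).
  rewrite FX0 sub0r => nF.
  have FX : F X = 0 by apply: lexnn_antisym.
  have sX : forall i, i \in I0 -> slk X i = 0.
    by apply: (lexnn_sum0 (P := fun i => i \in I0)) => // i _; apply: (good_feas g).
  have eX : X = X0.
    apply/eqP; rewrite -subr_eq0; apply/eqP.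
    apply: (Esub_inj (good_row_full g0)) => i iI0.
    by rewrite (rowA_sub A b) sX // (good_tight g0 iI0) subrr.
  have sub : I0 \subset I.
    apply/subsetP => i iI0; apply: contraT => niI.
    have := nondeg g niI; rewrite sX // => /lexpos0.
    by [].
  have eI : I0 = I.
    apply/eqP; rewrite eqEcard sub.
    have c1 : #|I| = n by case: g.
    have c2 : #|I0| = n by case: g0.
    by apply: eq_leq; exact: (etrans c1 (esym c2)).
  exists us; apply: (etrans (surjective_pairing _)).
  by rewrite -eX eI.
rewrite negb_forall => /existsP [r]; rewrite -ltNge => lr.
set k := enum_val r.
have kI : k \in I by apply: enum_valP.
have [u' [euu kI' sub']] := nb_exists kI.
have := hmin u' isT.
rewrite Fdiff (bigD1 r) //= big1 ?addr0; last first.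
  move=> r' rr'.
  have ne : enum_val r' != k by rewrite /k (inj_eq enum_val_inj).
  rewrite (good_tight (hgood u') (sub' _ (enum_valP r') ne)).
  by rewrite (good_tight g (enum_valP r')) subrr scaler0.
rewrite -/k (good_tight g kI) subr0 => hnn.
have p : lexpos (slk (lab u').2 k) by apply: nondeg (hgood u') kI'.
have p2 : lexpos (- (lam 0 r *: slk (lab u').2 k)).
  by rewrite -scaleNr; apply: lexposZ => //; rewrite oppr_gt0.
case: hnn => [z|pp]; last by case: (lexpos_asym pp p2).
by move: p2; rewrite z oppr0 => /lexpos0.
Qed.

End Graph.

Lemma bound_lemma (R : realType) (T : finType) (P : pred T) (p q : T -> R) :
  (forall i, P i -> 0 < q i) -> exists M, 0 < M /\ forall i, P i -> `|p i| < M * q i.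
Proof.
move=> hq.
set q' := fun i => if P i then q i else 1.
have q'p : forall i, 0 < q' i by move=> i; rewrite /q'; case: ifP => // /hq.
set S := \sum_i `|p i| / q' i.
have S0 : 0 <= S by apply: sumr_ge0 => i _; apply: divr_ge0 => //; apply: ltW.
exists (1 + S); split; first by apply: ltr_wpDr.
move=> i Pi.
have qi : q' i = q i by rewrite /q' Pi.
have le : `|p i| / q' i <= S.
  by rewrite /S (bigD1 i) //= lerDl; apply: sumr_ge0 => j _; apply: divr_ge0 => //; apply: ltW.
have : `|p i| <= S * q i.
  by rewrite -qi -ler_pdivrMr.
move/le_lt_trans; apply.
by rewrite mulrDl mul1r ltrDr; apply: hq.
Qed.

Section Geo.
Variables (R : realType) (m n : nat) (A : 'M[R]_(m, n)) (b : 'cV[R]_m).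
Local Notation bt := (btilde b).
Local Notation slk := (slk A b).
Local Notation feas := (feas A b).
Local Notation tightS := (tightS A b).
Local Notation good := (good_label A b).
Local Notation Esub := (Esub A).
Local Notation inP := (inP A b).

Definition cS (S : {set 'I_m}) : 'cV[R]_n := \sum_(i in S) (row i A)^T.

Lemma dotc_cS (S : {set 'I_m}) (z : 'cV[R]_n) : dotc (cS S) z = \sum_(i in S) (A *m z) i 0.
Proof.
rewrite /dotc.
under eq_bigr => j _ do rewrite /cS summxE big_distrl /=.
rewrite exchange_big /=; apply: eq_bigr => i _; rewrite mxE.
by apply: eq_bigr => j _; rewrite !mxE.
Qed.

Lemma dotcD (c x y : 'cV[R]_n) : dotc c (x + y) = dotc c x + dotc c y.
Proof. by rewrite /dotc -big_split /=; apply: eq_bigr => j _; rewrite mxE mulrDr. Qed.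

Lemma dotcZ (c : 'cV[R]_n) r (x : 'cV[R]_n) : dotc c (r *: x) = r * dotc c x.
Proof. by rewrite /dotc mulr_sumr; apply: eq_bigr => j _; rewrite mxE mulrCA. Qed.

Lemma dotcB (c x y : 'cV[R]_n) : dotc c (x - y) = dotc c x - dotc c y.
Proof. by rewrite dotcD -scaleN1r dotcZ mulN1r. Qed.

Lemma AzD (x y : 'cV[R]_n) i : (A *m (x + y)) i 0 = (A *m x) i 0 + (A *m y) i 0.
Proof. by rewrite mulmxDr mxE. Qed.

Lemma AzZ r (x : 'cV[R]_n) i : (A *m (r *: x)) i 0 = r * (A *m x) i 0.
Proof. by rewrite -scalemxAr mxE. Qed.

Lemma AzB (x y : 'cV[R]_n) i : (A *m (x - y)) i 0 = (A *m x) i 0 - (A *m y) i 0.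
Proof. by rewrite mulmxBr msubE. Qed.

Lemma slk_first X i : slk X i 0 0 = (A *m col ord0 X) i 0 - b i 0.
Proof.
rewrite msubE !rowE0 colA.
have -> : (0 : 'I_m.+1) = ord0 by apply: val_inj.
congr (_ - _).
have -> : (ord0 : 'I_m.+1) = lshift m (0 : 'I_1) by apply: val_inj.
exact: bt_head.
Qed.

Lemma feas_inP X : feas X -> inP (col ord0 X).
Proof.
move=> f i; have := lexnn_first (f i).
by rewrite slk_first subr_ge0.
Qed.

Lemma good_first I X i : good I X -> i \in I -> (A *m col ord0 X) i 0 = b i 0.
Proof.
move=> g iI; apply/eqP; rewrite -subr_eq0 -slk_first (good_tight g iI).
by rewrite mxE.
Qed.

Lemma vertex_of_good I X : good I X -> is_vertex A b (col ord0 X).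
Proof.
move=> g; split; first by exists (col ord0 X).
have xP := feas_inP (good_feas g).
have dv : dotc (cS I) (col ord0 X) = \sum_(i in I) b i 0.
  by rewrite dotc_cS; apply: eq_bigr => i iI; rewrite (good_first g iI).
exists (cS I) => z; split.
  move=> ->; split => // y yP; rewrite dv dotc_cS; apply: ler_sum => i _; exact: yP.
case=> zP hz.
have := hz _ xP; rewrite dv dotc_cS -subr_le0 -sumrB => hle.
have s0 : \sum_(i in I) ((A *m z) i 0 - b i 0) = 0.
  apply/eqP; rewrite eq_le hle /=; apply: sumr_ge0 => i _; rewrite subr_ge0; exact: zP.
apply/eqP; rewrite -subr_eq0; apply/eqP.
apply: (rowfull_ker (good_row_full g)) => i iI.
rewrite AzB (good_first g iI); apply: (psumr_eq0P _ s0) => // j _.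
by rewrite subr_ge0; exact: zP.
Qed.

End Geo.

Section Geo2.
Variables (R : realType) (m n : nat) (A : 'M[R]_(m, n)) (b : 'cV[R]_m).
Local Notation inP := (inP A b).

Lemma move_small (z d : 'cV[R]_n) : inP z ->
  (forall i, (A *m z) i 0 = b i 0 -> (A *m d) i 0 = 0) ->
  exists s, 0 < s /\ inP (z + s *: d) /\ inP (z - s *: d).
Proof.
move=> zP hd.
have hq : forall i, (A *m z) i 0 != b i 0 -> 0 < (A *m z) i 0 - b i 0.
  by move=> i ne; rewrite subr_gt0 lt_def ne zP.
have [M [M0 hM]] := bound_lemma (fun i => (A *m d) i 0) hq.
have key : forall i, forall eps : R, `|eps| <= 1 ->
    b i 0 <= (A *m (z + (eps / M) *: d)) i 0.
  move=> i eps he; rewrite AzD AzZ.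
  case: (eqVneq ((A *m z) i 0) (b i 0)) => [eq|ne].
    by rewrite hd // mulr0 addr0 eq.
  have h1 := hM i ne.
  rewrite -lerBlDl.
  have hx : `|eps / M * (A *m d) i 0| < (A *m z) i 0 - b i 0.
    rewrite normrM normf_div (gtr0_norm M0) mulrAC ltr_pdivrMr //.
    have na := normr_ge0 ((A *m d) i 0).
    have ne0 := normr_ge0 eps.
    move: h1 he na ne0; set x := `|_|; set y := `|_|; set q := (_ - _).
    move=> h1 he na ne0; nra.
  move: hx; rewrite ltr_norml => /andP [lo _].
  move: lo; set x := (_ * _); set q := (A *m z) i 0; move=> lo; lra.
exists M^-1; split; first by rewrite invr_gt0.
split.
  by move=> i; have := key i 1; rewrite normr1 mul1r; apply.
move=> i; have := key i (-1); rewrite normrN normr1 mulN1r scaleNr.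
by apply.
Qed.

End Geo2.

Section Geo3.
Variables (R : realType) (m n : nat) (A : 'M[R]_(m, n)) (b : 'cV[R]_m).
Local Notation inP := (inP A b).

Lemma vertex_ker (v d : 'cV[R]_n) : is_vertex A b v ->
  (forall i, (A *m v) i 0 = b i 0 -> (A *m d) i 0 = 0) -> d = 0.
Proof.
case=> _ [c hc] hd.
have [vP hv] := (hc v).1 erefl.
have [s [s0 [p1 p2]]] := move_small vP hd.
have m1 := hv _ p1; have m2 := hv _ p2.
rewrite dotcD dotcZ in m1; rewrite dotcB dotcZ in m2.
have e0 : s * dotc c d = 0 by lra.
have : minimizers A b c (v + s *: d).
  split => // y yP; rewrite dotcD dotcZ e0 addr0; exact: hv.
move/(hc _).2 => /(congr1 (fun w => w - v)); rewrite addrAC !subrr add0r => /eqP.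
by rewrite scaler_eq0 (gt_eqF s0) /= => /eqP.
Qed.

Lemma vertex_interior (v p q : 'cV[R]_n) r : is_vertex A b v -> inP p -> inP q ->
  0 < r -> r < 1 -> v = (1 - r) *: p + r *: q -> p = v.
Proof.
case=> _ [c hc] pP qP r0 r1 ev.
have [vP hv] := (hc v).1 erefl.
have h1 := hv _ pP; have h2 := hv _ qP.
have e : dotc c v = (1 - r) * dotc c p + r * dotc c q.
  by rewrite {1}ev dotcD !dotcZ.
have : dotc c p <= dotc c v by nra.
move=> le; apply/(hc _).2; split => // y yP.
exact: le_trans le (hv _ yP).
Qed.

End Geo3.

Section Build.
Variables (R : realType) (m n : nat) (A : 'M[R]_(m, n)) (b : 'cV[R]_m).
Local Notation bt := (btilde b).
Local Notation slk := (slk A b).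
Local Notation feas := (feas A b).
Local Notation tightS := (tightS A b).
Local Notation good := (good_label A b).
Local Notation inP := (inP A b).

Lemma scaleE k (c : R) (M : 'rV[R]_k) j : (c *: M) 0 j = c * M 0 j.
Proof. by rewrite mxE. Qed.

Lemma col0_move (X : 'M[R]_(n, m.+1)) (d : 'cV[R]_n) (t : 'rV[R]_m.+1) :
  t 0 0 = 0 -> col ord0 (X + d *m t) = col ord0 X.
Proof.
move=> t0; apply/matrixP => l j; rewrite !mxE big_ord1.
have -> : (ord0 : 'I_m.+1) = 0 by apply: val_inj.
by rewrite t0 mulr0 addr0.
Qed.

Lemma build_step (x e : 'cV[R]_n) (Q : {set 'I_m}) X (d0 : 'cV[R]_n) i0 :
  (forall i, i \in Q -> (A *m x) i 0 = b i 0) ->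
  (forall i, i \in Q -> (A *m e) i 0 = 0) ->
  (forall i, (A *m x) i 0 = b i 0 -> i \notin Q -> 0 < (A *m e) i 0) ->
  feas X -> col ord0 X = x -> tightS X \subset Q ->
  (forall i, i \in tightS X -> (A *m d0) i 0 = 0) -> i0 \in Q -> (A *m d0) i0 0 < 0 ->
  exists X', [/\ feas X', col ord0 X' = x, tightS X \proper tightS X' & tightS X' \subset Q].
Proof.
move=> hQx hQe hTe fX cX sX hd0 i0Q ai0.
have hq : forall i, ((A *m x) i 0 == b i 0) && (i \notin Q) -> 0 < (A *m e) i 0.
  by move=> i /andP [/eqP h1 h2]; apply: hTe.
have [M [M0 hM]] := bound_lemma (fun i => (A *m d0) i 0) hq.
set d := d0 + M *: e.
have dE : forall i, (A *m d) i 0 = (A *m d0) i 0 + M * (A *m e) i 0.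
  by move=> i; rewrite AzD AzZ.
have dS : forall i, i \in tightS X -> (A *m d) i 0 = 0.
  move=> i it; rewrite dE hd0 // hQe ?mulr0 ?addr0 //; exact: (subsetP sX).
have di0 : (A *m d) i0 0 < 0 by rewrite dE hQe // mulr0 addr0.
have dT : forall i, (A *m x) i 0 = b i 0 -> i \notin Q -> 0 < (A *m d) i 0.
  move=> i h1 h2; rewrite dE.
  have := hM i; rewrite h1 eqxx h2 => /(_ isT) hlt.
  have := ler_normr ((A *m d0) i 0); set p := (A *m d0) i 0.
  move: hlt; set q := M * _ => hlt hn.
  have : - p <= `|p| by rewrite ler_normr lexx orbT.
  move=> hh; lra.
set r := fun i => (- (A *m d) i 0)^-1 *: slk X i.
have [ix [Nis hmin]] := lexmin r (P := fun i => (A *m d) i 0 < 0) (ex_intro _ i0 di0).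
set t := r ix.
have tnn : lexnn t.
  by apply: lexnnZ; [rewrite invr_ge0 oppr_ge0 ltW | exact: fX].
have t0 : t 0 0 = 0.
  apply/eqP; rewrite eq_le lexnn_first // andbT.
  have := lexnn_first (hmin _ di0).
  rewrite msubE /t /r !scaleE slk_first cX (hQx _ i0Q) subrr mulr0 sub0r oppr_ge0.
  by [].
set X' := X + d *m t.
have slkE : forall i, slk X' i = slk X i + (A *m d) i 0 *: t by move=> i; apply: sig_move.
have cX' : col ord0 X' = x by rewrite col0_move.
have rE : forall i, (A *m d) i 0 < 0 -> slk X i = (- (A *m d) i 0) *: r i.
  move=> i ai; rewrite /r scalerA mulfV ?scale1r // oppr_eq0 lt_eqF //.
have fX' : feas X'.
  move=> i; rewrite slkE.
  case: (ltP ((A *m d) i 0) 0) => ai.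
    have -> : slk X i + (A *m d) i 0 *: t = (- (A *m d) i 0) *: (r i - t).
      by rewrite (rE _ ai) scalerBr !scaleNr opprK.
    apply: lexnnZ; first by rewrite oppr_ge0 ltW.
    exact: hmin.
  exact: lexnnD (fX i) (lexnnZ ai tnn).
have s1 : tightS X \subset tightS X'.
  apply/subsetP => i it; rewrite inE slkE (dS _ it) scale0r addr0.
  by move: it; rewrite inE.
have s2 : tightS X' \subset Q.
  apply/subsetP => i; rewrite inE slkE => /eqP z.
  case: (boolP (i \in tightS X)) => [it|nt]; first exact: (subsetP sX).
  have pi : lexpos (slk X i).
    by apply: lexnn_pos (fX i) _; move: nt; rewrite inE.
  have ai : (A *m d) i 0 < 0.
    rewrite ltNge; apply/negP => ai.
    by have := lexposDnn pi (lexnnZ ai tnn); rewrite z => /lexpos0.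
  have tx : (A *m x) i 0 = b i 0.
    have := congr1 (fun M : 'rV[R]_m.+1 => M 0 0) z.
    rewrite -slkE slk_first cX' => h.
    by apply/eqP; rewrite -subr_eq0 h mxE.
  apply: contraT => nQ; have := dT i tx nQ.
  by rewrite ltNge ltW.
exists X'; split => //.
rewrite properE s1 /=; apply/subsetPn; exists ix.
  by rewrite inE slkE (rE _ Nis) -scalerDl addNr scale0r.
by rewrite inE; apply: contraTN Nis => /eqP h; rewrite -(dS ix) ?ltxx // inE h.
Qed.

End Build.

Section Build2.
Variables (R : realType) (m n : nat) (A : 'M[R]_(m, n)) (b : 'cV[R]_m).
Local Notation bt := (btilde b).
Local Notation slk := (slk A b).
Local Notation feas := (feas A b).
Local Notation tightS := (tightS A b).
Local Notation good := (good_label A b).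
Local Notation inP := (inP A b).

Lemma build (x e : 'cV[R]_n) (Q : {set 'I_m}) X :
  (forall i, i \in Q -> (A *m x) i 0 = b i 0) ->
  (forall i, i \in Q -> (A *m e) i 0 = 0) ->
  (forall i, (A *m x) i 0 = b i 0 -> i \notin Q -> 0 < (A *m e) i 0) ->
  feas X -> col ord0 X = x -> tightS X \subset Q ->
  exists X', [/\ feas X', col ord0 X' = x, tightS X \subset tightS X', tightS X' \subset Q &
    forall d : 'cV[R]_n, (forall i, i \in tightS X' -> (A *m d) i 0 = 0) ->
      forall i, i \in Q -> (A *m d) i 0 = 0].
Proof.
move=> hQx hQe hTe.
suff H : forall k X, (#|Q :\: tightS X| < k)%N -> feas X -> col ord0 X = x ->
  tightS X \subset Q ->
  exists X', [/\ feas X', col ord0 X' = x, tightS X \subset tightS X', tightS X' \subset Q &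
    forall d : 'cV[R]_n, (forall i, i \in tightS X' -> (A *m d) i 0 = 0) ->
      forall i, i \in Q -> (A *m d) i 0 = 0].
  by apply: H (ltnSn _).
elim=> [//|k IH] {}X hk fX cX sX.
case: (classic (forall d : 'cV[R]_n, (forall i, i \in tightS X -> (A *m d) i 0 = 0) ->
      forall i, i \in Q -> (A *m d) i 0 = 0)) => [hd|nd].
  by exists X; split.
have cont : forall (d : 'cV[R]_n) i0, (forall i, i \in tightS X -> (A *m d) i 0 = 0) ->
    i0 \in Q -> (A *m d) i0 0 < 0 ->
  exists X', [/\ feas X', col ord0 X' = x, tightS X \subset tightS X', tightS X' \subset Q &
    forall d : 'cV[R]_n, (forall i, i \in tightS X' -> (A *m d) i 0 = 0) ->
      forall i, i \in Q -> (A *m d) i 0 = 0].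
  move=> d i0 hd i0Q di0.
  have [X' [f' c' pr s']] := build_step hQx hQe hTe fX cX sX hd i0Q di0.
  have lt : (#|Q :\: tightS X'| < #|Q :\: tightS X|)%N.
    have pp : Q :\: tightS X' \proper Q :\: tightS X.
      rewrite properE; apply/andP; split; first by apply: setDS; exact: proper_sub pr.
      have := pr; case/properP => _ [j jX' jX].
      apply/subsetPn; exists j; first by rewrite inE jX (subsetP s' _ jX').
      by rewrite inE jX'.
    exact: proper_card pp.
  have [X'' [f'' c'' s1 s2 h2]] := IH X' (leq_trans lt hk) f' c' s'.
  exists X''; split => //.
  exact: subset_trans (proper_sub pr) s1.
have [d0 nd0] := not_all_ex_not _ _ nd.
have [hd0 nd1] := imply_to_and _ _ nd0.
have [i0 ni0] := not_all_ex_not _ _ nd1.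
have [i0Q ne] := imply_to_and _ _ ni0.
case: (ltgtP ((A *m d0) i0 0) 0) => h; last by [].
  exact: cont hd0 i0Q h.
apply: (cont (- d0) i0) => //.
  by move=> i it; rewrite mulmxN mxE hd0 ?oppr0.
by rewrite mulmxN mxE oppr_lt0.
Qed.

End Build2.

Section Start.
Variables (R : realType) (m n : nat) (A : 'M[R]_(m, n)) (b : 'cV[R]_m).
Local Notation bt := (btilde b).
Local Notation slk := (slk A b).
Local Notation feas := (feas A b).
Local Notation tightS := (tightS A b).
Local Notation good := (good_label A b).
Local Notation inP := (inP A b).

Definition X0 (v : 'cV[R]_n) : 'M[R]_(n, m.+1) := row_mx v (0 : 'M[R]_(n, m)).

Lemma X0_col v : col ord0 (X0 v) = v.
Proof.
apply/matrixP => i j; rewrite mxE ord1.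
have -> : (ord0 : 'I_m.+1) = lshift m (0 : 'I_1) by apply: val_inj.
exact: (row_mxEl v (0 : 'M[R]_(n, m)) i (0 : 'I_1)).
Qed.

Lemma X0_tail v i j : slk (X0 v) i 0 (rshift 1 j) = (i == j)%:R.
Proof.
rewrite msubE !rowE0 bt_tail -colA.
have -> : col (rshift 1 j) (X0 v) = 0.
  apply/matrixP => l z; rewrite mxE.
  have := row_mxEr v (0 : 'M[R]_(n, m)) l j; rewrite /X0 => ->.
  by rewrite !mxE.
by rewrite mulmx0 mxE sub0r opprK.
Qed.

Lemma X0_feas v : inP v -> feas (X0 v).
Proof.
move=> vP i.
case: (ltrP (b i 0) ((A *m v) i 0)) => h.
  right; exists 0; split => // ; rewrite slk_first X0_col subr_gt0 //.
have e : (A *m v) i 0 = b i 0 by apply/eqP; rewrite eq_le h vP.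
right; exists (rshift 1 i); split; last by rewrite X0_tail eqxx ltr01.
move=> j lt.
case: (posnP j) => [j0|jp].
  have -> : j = 0 by apply: val_inj => /=; rewrite j0.
  by rewrite slk_first X0_col e subrr.
have lj : (j.-1 < m)%N.
  by rewrite -ltnS prednK // ltn_ord.
have -> : j = rshift 1 (Ordinal lj) by apply: val_inj => /=; rewrite add1n prednK.
rewrite X0_tail; case: eqP => // ei.
by move: lt; rewrite ei /= add1n prednK // ltnn.
Qed.

Lemma X0_tight v : tightS (X0 v) = set0.
Proof.
apply/setP => i; rewrite !inE; apply/negP => /eqP h.
by have := congr1 (fun M : 'rV[R]_m.+1 => M 0 (rshift 1 i)) h; rewrite X0_tail eqxx mxE => /eqP; rewrite oner_eq0.
Qed.

End Start.

Section Edges.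
Variables (R : realType) (m n : nat) (A : 'M[R]_(m, n)) (b : 'cV[R]_m).
Local Notation bt := (btilde b).
Local Notation slk := (slk A b).
Local Notation feas := (feas A b).
Local Notation tightS := (tightS A b).
Local Notation good := (good_label A b).
Local Notation inP := (inP A b).

Lemma vertex_good v : is_vertex A b v -> exists I X, good I X /\ col ord0 X = v.
Proof.
move=> vv.
have vP : inP v by case: vv => _ [c hc]; case: ((hc v).1 erefl).
set T := [set i | (A *m v) i 0 == b i 0].
have h1 : forall i, i \in T -> (A *m v) i 0 = b i 0 by move=> i; rewrite inE => /eqP.
have h2 : forall i, i \in T -> (A *m (0 : 'cV[R]_n)) i 0 = 0 by move=> i iT; rewrite mulmx0 mxE.
have h3 : forall i, (A *m v) i 0 = b i 0 -> i \notin T -> 0 < (A *m (0 : 'cV[R]_n)) i 0.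
  by move=> i h; rewrite inE h eqxx.
have h4 : tightS (X0 m v) \subset T by rewrite X0_tight sub0set.
have [X [fX cX _ _ hk]] := build h1 h2 h3 (X0_feas vP) (X0_col m v) h4.
exists (tightS X), X; split => //.
apply: (tight_good fX) => d hd; apply: (vertex_ker vv) => j hj.
by apply: (hk d hd j); rewrite inE hj.
Qed.

Lemma one_diff (I I' : {set 'I_m}) : #|I| = n -> #|I'| = n -> #|I :&: I'| = (n - 1)%N ->
  (0 < n)%N -> exists k, I :\: I' = [set k].
Proof.
move=> c c' ci n0; apply/cards1P.
by rewrite cardsD ci c subKn.
Qed.

Lemma edge_from_G I X I' X' : good I X -> good I' X' -> #|I :&: I'| = (n - 1)%N ->
  col ord0 X <> col ord0 X' -> adjacent A b (col ord0 X) (col ord0 X').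
Proof.
move=> g g' ci ne.
set x := col ord0 X in ne *; set y := col ord0 X' in ne *.
have n0 : (0 < n)%N.
  case: (posnP n) => // n0; case: ne; apply/matrixP => i j.
  by have := ltn_ord i; rewrite {2}n0.
have cI : #|I| = n by case: g.
have cI' : #|I'| = n by case: g'.
have [k hk] := one_diff cI cI' ci n0.
have ci' : #|I' :&: I| = (n - 1)%N by rewrite setIC.
have [k' hk'] := one_diff cI' cI ci' n0.
have kD : k \in I :\: I' by rewrite hk set11.
have k'D : k' \in I' :\: I by rewrite hk' set11.
move: (kD) (k'D); rewrite !inE => /andP [kI' kI] /andP [k'I k'I'].
have oI : forall i, i \in I -> i != k -> i \in I'.
  move=> i iI ik; apply: contraR ik => iI'; apply/eqP/set1P; rewrite -hk inE iI iI'.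
  by [].
have oI' : forall i, i \in I' -> i != k' -> i \in I.
  move=> i iI ik; apply: contraR ik => iI'; apply/eqP/set1P; rewrite -hk' inE iI iI'.
  by [].
have xP : inP x := feas_inP (good_feas g).
have yP : inP y := feas_inP (good_feas g').
have tx : forall i, i \in I -> (A *m x) i 0 = b i 0 by move=> i; apply: good_first g.
have ty : forall i, i \in I' -> (A *m y) i 0 = b i 0 by move=> i; apply: good_first g'.
set J := I :&: I'.
have dJ : forall z, dotc (cS A J) z = \sum_(i in J) (A *m z) i 0 by move=> z; apply: dotc_cS.
split; first exact: vertex_of_good g.
split; first exact: vertex_of_good g'.
split => //.
split; first by exists x, 0; rewrite lexx ler01 subr0 scale1r scale0r addr0.
exists (cS A J) => z; split.
  case=> t [/andP [t0 t1] ez].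
  have Az : forall i, (A *m z) i 0 = (1 - t) * (A *m x) i 0 + t * (A *m y) i 0.
    by move=> i; rewrite ez AzD !AzZ.
  have zP : inP z.
    move=> i; rewrite Az; have := xP i; have := yP i; nra.
  split => // w wP; rewrite !dJ; apply: ler_sum => i; rewrite inE => /andP [iI iI'].
  by rewrite Az tx // ty // -mulrDl subrK mul1r; apply: wP.
case=> zP hz.
have hle := hz _ xP; rewrite !dJ in hle.
have s0 : \sum_(i in J) ((A *m z) i 0 - b i 0) = 0.
  apply/eqP; rewrite eq_le sumr_ge0 ?andbT; last by move=> i _; rewrite subr_ge0; apply: zP.
  rewrite sumrB subr_le0; apply: le_trans hle _; apply: ler_sum => i; rewrite inE => /andP [iI _].
  by rewrite tx.
have tz : forall i, i \in J -> (A *m z) i 0 = b i 0.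
  move=> i iJ; apply/eqP; rewrite -subr_eq0; apply/eqP.
  by apply: (psumr_eq0P _ s0) => // j _; rewrite subr_ge0; apply: zP.
set vv := y - x; set w := z - x.
have Avv : forall i, i \in J -> (A *m vv) i 0 = 0.
  move=> i; rewrite inE => /andP [iI iI']; by rewrite AzB tx // ty // subrr.
have Aw : forall i, i \in J -> (A *m w) i 0 = 0.
  move=> i iJ; move: (iJ); rewrite inE => /andP [iI iI']; by rewrite AzB tz // tx // subrr.
have vv0 : vv != 0 by rewrite subr_eq0; apply/eqP => h; apply: ne; rewrite h.
set a := (A *m vv) k 0.
have a0 : 0 < a.
  rewrite lt_def; apply/andP; split; last by rewrite /a AzB tx // subr_ge0; apply: yP.
  apply: contra vv0 => /eqP ha; apply/eqP.
  apply: (rowfull_ker (good_row_full g)) => i iI.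
  case: (eqVneq i k) => [->//|ik]; apply: Avv; by rewrite inE iI oI.
set a' := (A *m vv) k' 0.
have a'0 : a' < 0.
  rewrite lt_def; apply/andP; split; last by rewrite /a' AzB ty // subr_le0; apply: xP.
  apply: contra vv0 => /eqP ha; apply/eqP.
  apply: (rowfull_ker (good_row_full g')) => i iI'.
  case: (eqVneq i k') => [->//|ik]; apply: Avv; by rewrite inE iI' oI'.
set s := (A *m w) k 0 / a.
have ws : w = s *: vv.
  apply/eqP; rewrite -subr_eq0; apply/eqP.
  apply: (rowfull_ker (good_row_full g)) => i iI.
  rewrite AzB AzZ; case: (eqVneq i k) => [->|ik].
    by rewrite /s -/a mulfVK ?subrr // gt_eqF.
  by rewrite Aw ?Avv ?mulr0 ?subrr // inE iI oI.
have Azk : forall i, (A *m z) i 0 = (A *m x) i 0 + s * (A *m vv) i 0.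
  by move=> i; rewrite -AzZ -ws -AzD addrC subrK.
have s0' : 0 <= s.
  rewrite /s divr_ge0 ?(ltW a0) // /w AzB tx // subr_ge0; exact: zP.
have s1 : s <= 1.
  have hz' := zP k'; rewrite Azk -(ty _ k'I') -/a' in hz'.
  have ea : a' = (A *m y) k' 0 - (A *m x) k' 0 by rewrite /a' /vv AzB.
  move: hz' ea a'0; set Y1 := (A *m y) k' 0; set X1 := (A *m x) k' 0.
  move=> hz' ea a'0; nra.
exists s; split; first by rewrite s0' s1.
have ez : z = x + s *: vv by rewrite -ws addrC subrK.
by rewrite ez /vv scalerBr scalerBl scale1r addrA addrAC.
Qed.

End Edges.

Section Edges2.
Variables (R : realType) (m n : nat) (A : 'M[R]_(m, n)) (b : 'cV[R]_m).
Local Notation bt := (btilde b).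
Local Notation slk := (slk A b).
Local Notation feas := (feas A b).
Local Notation tightS := (tightS A b).
Local Notation good := (good_label A b).
Local Notation inP := (inP A b).

Lemma seg_eq (x y : 'cV[R]_n) t : (1 - t) *: x + t *: y = x + t *: (y - x).
Proof. by rewrite scalerBr scalerBl scale1r addrA addrAC. Qed.

Lemma col0_move_gen (X : 'M[R]_(n, m.+1)) (d : 'cV[R]_n) (t : 'rV[R]_m.+1) :
  col ord0 (X + d *m t) = col ord0 X + t 0 0 *: d.
Proof.
apply/matrixP => l j; rewrite !mxE big_ord1.
have -> : (ord0 : 'I_m.+1) = 0 by apply: val_inj.
have -> : (ord0 : 'I_1) = 0 by apply: val_inj.
by rewrite (ord1 j) mulrC.
Qed.

Lemma edge_line (x y : 'cV[R]_n) c (d : 'cV[R]_n) : inP x -> inP y ->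
  (forall z, segment x y z <-> minimizers A b c z) ->
  (forall i, (A *m x) i 0 = b i 0 -> (A *m y) i 0 = b i 0 -> (A *m d) i 0 = 0) ->
  exists al, d = al *: (y - x).
Proof.
move=> xP yP hc hd.
set h : R := 2^-1.
have h01 : 0 <= h <= 1.
  by rewrite /h invr_ge0 ler0n /= invf_le1 ?ler1n // ltr0n.
set mid := x + h *: (y - x).
have mm : minimizers A b c mid by apply/hc; exists h; split => //; rewrite seg_eq.
have [midP hmin] := mm.
have td : forall i, (A *m mid) i 0 = b i 0 -> (A *m d) i 0 = 0.
  move=> i; rewrite AzD AzZ AzB => e.
  have := xP i; have := yP i; have h2 : h * 2 = 1 by rewrite /h mulVf // pnatr_eq0.
  move=> yi xi; apply: hd; [move: e yi xi h2|move: e yi xi h2];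
   set X1 := (A *m x) i 0; set Y1 := (A *m y) i 0; move=> e yi xi h2; nra.
have [s [s0 [p1 p2]]] := move_small midP td.
have m1 := hmin _ p1; have m2 := hmin _ p2.
rewrite dotcD dotcZ in m1; rewrite dotcB dotcZ in m2.
have e0 : s * dotc c d = 0 by lra.
have : minimizers A b c (mid + s *: d).
  split => // w wP; rewrite dotcD dotcZ e0 addr0; exact: hmin.
move/hc => [t [_ et]].
move: et; rewrite seg_eq /mid -addrA => /addrI e1.
have esd : s *: d = (t - h) *: (y - x) by rewrite scalerBl -e1 addrAC subrr add0r.
exists (s^-1 * (t - h)); rewrite -scalerA -esd scalerA mulVf ?scale1r //.
by rewrite gt_eqF.
Qed.

End Edges2.

Section Edges3.
Variables (R : realType) (m n : nat) (A : 'M[R]_(m, n)) (b : 'cV[R]_m).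
Local Notation bt := (btilde b).
Local Notation slk := (slk A b).
Local Notation feas := (feas A b).
Local Notation tightS := (tightS A b).
Local Notation good := (good_label A b).
Local Notation inP := (inP A b).

Lemma vertex_inP v : is_vertex A b v -> inP v.
Proof. by case=> _ [c hc]; case: ((hc v).1 erefl). Qed.

Lemma edge_to_good (x y : 'cV[R]_n) : adjacent A b x y ->
  exists I X, [/\ good I X, col ord0 X = x &
    exists2 k, k \in I & forall I' X', good I' X' -> k \notin I' ->
      (forall i, i \in I -> i != k -> i \in I') -> col ord0 X' = y].
Proof.
case=> vx [vy [nxy [_ [c hc]]]].
have xP := vertex_inP vx; have yP := vertex_inP vy.
set T := [set i | (A *m x) i 0 == b i 0].
set TE := [set i | ((A *m x) i 0 == b i 0) && ((A *m y) i 0 == b i 0)].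
have h1 : forall i, i \in TE -> (A *m x) i 0 = b i 0 by move=> i; rewrite inE => /andP [/eqP].
have h2 : forall i, i \in TE -> (A *m (y - x)) i 0 = 0.
  by move=> i; rewrite inE AzB => /andP [/eqP -> /eqP ->]; rewrite subrr.
have h3 : forall i, (A *m x) i 0 = b i 0 -> i \notin TE -> 0 < (A *m (y - x)) i 0.
  move=> i hx; rewrite inE hx eqxx /= AzB hx => hy.
  by rewrite subr_gt0 lt_def hy yP.
have h4 : tightS (X0 m x) \subset TE by rewrite X0_tight sub0set.
have [X1 [fX1 cX1 _ sub1 hk1]] := build h1 h2 h3 (X0_feas xP) (X0_col m x) h4.
have g1 : forall i, i \in T -> (A *m x) i 0 = b i 0 by move=> i; rewrite inE => /eqP.
have g2 : forall i, i \in T -> (A *m (0 : 'cV[R]_n)) i 0 = 0 by move=> i iT; rewrite mulmx0 mxE.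
have g3 : forall i, (A *m x) i 0 = b i 0 -> i \notin T -> 0 < (A *m (0 : 'cV[R]_n)) i 0.
  by move=> i h; rewrite inE h eqxx.
have g4 : tightS X1 \subset T.
  apply: subset_trans sub1 _; apply/subsetP => i; rewrite !inE => /andP [].
  by [].
have [X2 [fX2 cX2 s12 sub2 hk2]] := build g1 g2 g3 fX1 cX1 g4.
set I := tightS X2.
have gI : good I X2.
  apply: (tight_good fX2) => d hd; apply: (vertex_ker vx) => j hj.
  by apply: (hk2 d hd j); rewrite inE hj.
exists I, X2; split => //.
have nz : y - x != 0 by rewrite subr_eq0; apply/eqP => h; apply: nxy; rewrite h.
have [k kI kS1] : exists2 k, k \in I & k \notin tightS X1.
  apply/exists_inP; rewrite -negb_forall_in; apply: contra nz => /forall_inP hall.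
  apply/eqP; apply: (rowfull_ker (good_row_full gI)) => i iI.
  apply: h2; exact: (subsetP sub1 _ (hall _ iI)).
exists k => // I' X' g' kI' sub'.
have [d [hd hdk]] := dir_exists gI kI.
set t := slk X' k.
have eX' : X' = X2 + d *m t.
  have -> : t = row k (A *m (X' - X2)) by rewrite (rowA_sub A b) (good_tight gI kI) subr0.
  rewrite -(rank1 gI kI hd hdk); first by rewrite addrC subrK.
  move=> i iI ik.
  by rewrite (rowA_sub A b) (good_tight gI iI) (good_tight g' (sub' _ iI ik)) subrr.
have tp : lexpos t by apply: nondeg g' kI'.
have dS1 : forall i, i \in tightS X1 -> (A *m d) i 0 = 0.
  move=> i iS; apply: hd; first exact: (subsetP s12).
  by apply: contraNneq kS1 => <-.
have dTE := hk1 d dS1.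
have dTE' : forall i, (A *m x) i 0 = b i 0 -> (A *m y) i 0 = b i 0 -> (A *m d) i 0 = 0.
  by move=> i ex ey; apply: dTE; rewrite inE ex ey !eqxx.
have [al eal] := edge_line xP yP hc dTE'.
have kT : (A *m x) k 0 = b k 0 by apply: g1; exact: (subsetP sub2).
have yxk : 0 <= (A *m (y - x)) k 0 by rewrite AzB kT subr_ge0; apply: yP.
have al0 : 0 < al.
  move: hdk; rewrite eal AzZ; move: yxk; set a := (A *m (y - x)) k 0 => ha hh; nra.
set t0 := t 0 0.
have t00 : 0 <= t0 by apply: lexnn_first; right.
have ex' : col ord0 X' = x + (t0 * al) *: (y - x).
  by rewrite eX' col0_move_gen cX2 eal scalerA.
set be := t0 * al.
have cI : #|I| = n by case: gI.
have cI' : #|I'| = n by case: g'.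
have be0 : 0 < be.
  rewrite /be pmulr_lgt0 // lt_def t00 andbT; apply/eqP => tz.
  have [l lI' lI] : exists2 l, l \in I' & l \notin I.
    apply/subsetPn; apply: (contraNN _ kI') => sI.
    have -> : I' = I by apply/eqP; rewrite eqEcard sI cI cI' leqnn.
    exact: kI.
  have z : slk X' l = 0 by apply: good_tight g' lI'.
  have pl : lexpos (slk X2 l) by apply: nondeg gI lI.
  have dl : (A *m d) l 0 < 0.
    rewrite ltNge; apply/negP => dl.
    have := lexposDnn pl (lexnnZ dl (or_intror tp)).
    by rewrite -sig_move -eX' z => /lexpos0.
  have xl : (A *m x) l 0 = b l 0.
    have := congr1 (fun M : 'rV[R]_m.+1 => M 0 0) z.
    rewrite slk_first ex' /be -/t0 tz mul0r scale0r addr0 => h.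
    by apply/eqP; rewrite -subr_eq0 h mxE.
  move: dl; rewrite eal AzZ AzB xl; apply/negP; rewrite -leNgt.
  by apply: mulr_ge0; [exact: ltW | rewrite subr_ge0; apply: yP].
have vx' := vertex_of_good g'.
have x'P := vertex_inP vx'.
case: (ltgtP be 1) => hb.
- have := vertex_interior vx' xP yP be0 hb.
  rewrite seg_eq -ex' => /(_ erefl) ex.
  exfalso; move: ex'; rewrite -ex => /(congr1 (fun w => w - x)).
  rewrite subrr addrC addKr => /esym /eqP; rewrite scaler_eq0 (gt_eqF be0) /=.
  by apply/negP.
- have bi0 : 0 < be^-1 by rewrite invr_gt0.
  have bi1 : be^-1 < 1 by rewrite invf_lt1.
  have := vertex_interior vy xP x'P bi0 bi1.
  have e : x + be^-1 *: (x + be *: (y - x) - x) = y.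
    by rewrite addrAC subrr add0r scalerA mulVf ?gt_eqF // scale1r addrC subrK.
  rewrite seg_eq ex' e.
  by move=> /(_ erefl) ex; case: nxy.
- by rewrite ex' -/be hb scale1r addrC subrK.
Qed.
End Edges3.


Unset Implicit Arguments.

Theorem mainTheorem7 (R : realType) (m n : nat)
  (A : 'M[R]_(m, n)) (b : 'cV[R]_m)
  (V : finType) (e : rel V) (lab : V -> {set 'I_m} * 'M[R]_(n, m.+1)) :
  bounded_P A b ->
  injective lab ->
  symmetric e ->
  (exists u : V, True) ->
  (forall u : V, good_label A b (lab u).1 (lab u).2) ->
  (forall u : V, #|[set u' | e u u']| = n) ->
  (forall u u' : V, e u u' -> #|(lab u).1 :&: (lab u').1| = (n - 1)%N) ->
  (forall x : 'cV[R]_n, is_vertex A b x <-> exists u : V, col ord0 (lab u).2 = x) /\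
  (forall x y : 'cV[R]_n, adjacent A b x y <->
     exists u u' : V, [/\ e u u', col ord0 (lab u).2 = x, col ord0 (lab u').2 = y & x <> y]).
Proof.
move=> _ hinj _ [u0 _] hgood hdeg hint.
split.
  move=> x; split.
    move/vertex_good => [I [X [g cx]]].
    have [u hu] := complete hinj hgood hdeg hint u0 g.
    by exists u; rewrite hu.
  by case=> u <-; apply: vertex_of_good (hgood u).
move=> x y; split.
  move=> adj.
  have nxy : x <> y by case: adj => _ [_ [nxy _]].
  have [I [X [g cx [k kI hk]]]] := edge_to_good adj.
  have [u hu] := complete hinj hgood hdeg hint u0 g.
  have kIu : k \in (lab u).1 by rewrite hu.
  have [u' [euu ku' sub']] := nb_exists hinj hgood hdeg hint kIu.
  exists u, u'; split => //; first by rewrite hu.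
  apply: (hk _ _ (hgood u') ku').
  by move: sub'; rewrite hu.
case=> u [u' [euu <- <- nxy]].
exact: edge_from_G (hgood u) (hgood u') (hint _ _ euu) nxy.
Qed.
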